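(* Let $L$ be a finite field of characteristic $2$ and cardinality $q>2$ with $q\not\equiv 2,4 \pmod 5$. Let $f\colon L\to L$, $f(x)=x^s$, be a power permutation of $L$ (i.e. $\gcd(s,q-1)=1$). If $f$ is almost perfect nonlinear, then there exists $a\in L^{\times}$ such that $\widehat{f}(a)\equiv 0 \pmod 5$.
   Context: Let $\mu$ be the canonical additive character of $L$, $\mu(x)=\exp(2i\pi\,\mathrm{Tr}(x)/2)=(-1)^{\mathrm{Tr}(x)}$, where $\mathrm{Tr}$ is the absolute trace of $L/\mathbb{F}_2$. The Fourier coefficient of a map $f\colon L\to L$ at $a\in L$ is $\widehat{f}(a)=\sum_{x\in L}\mu(ax+f(x))$; here these are rational integers. A map $f\colon L\to L$ is almost perfect nonlinear (APN) if for every $u\in L^{\times}$ the map $x\mapsto f(x+u)+f(x)$ is two-to-one. *)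

(* Defs.v *)
From HB Require Import structures.
From mathcomp Require Import all_boot all_order all_algebra all_field.
Set Implicit Arguments. Unset Strict Implicit. Unset Printing Implicit Defensive.
Import GRing.Theory Num.Theory.
Local Open Scope ring_scope.

Definition absTr (L : finFieldType) (x : L) : L :=
  \sum_(i < logn 2 #|L|) x ^+ (2 ^ i).

(* Canonical additive character mu(x) = (-1)^Tr(x), as a rational integer
   (Tr(x) lies in the prime field {0,1}). *)
Definition mu (L : finFieldType) (x : L) : int :=
  if absTr x == 0 then 1 else -1.

Definition fourier (L : finFieldType) (f : L -> L) (a : L) : int :=
  \sum_(x : L) mu (a * x + f x).

Definition two_to_one (L : finFieldType) (g : L -> L) : Prop :=
  forall y : L, #|[set x | g x == y]| = 0%N \/ #|[set x | g x == y]| = 2%N.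

Definition APN (L : finFieldType) (f : L -> L) : Prop :=
  forall u : L, u != 0 -> two_to_one (fun x => f (x + u) + f x).

(* Main.v *)
Require Import Defs.
From HB Require Import structures.
From mathcomp Require Import all_boot all_order all_algebra all_field.
From mathcomp Require Import pgroup abelian ring zify.
Import GRing.Theory Num.Theory.
Local Open Scope ring_scope.
Set Implicit Arguments. Unset Strict Implicit. Unset Printing Implicit Defensive.



Lemma cardL2 (L : finFieldType) : (2 \in [pchar L])%N -> #|L| = (2 ^ logn 2 #|L|)%N.
Proof.
move=> h; have := abelem_pgroup (fin_ring_pchar_abelem h).
by rewrite pgroupE cardsT => H; rewrite -p_part part_pnat_id.
Qed.

Lemma absTrD (L : finFieldType) : (2 \in [pchar L])%N -> forall x y : L, absTr (x+y) = absTr x + absTr y.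
Proof.
move=> h x y; rewrite /absTr -big_split; apply: eq_bigr => i _; apply: exprDn_pchar.
by rewrite pnatX pnatE // h.
Qed.

Lemma absTr_sq (L : finFieldType) : (2 \in [pchar L])%N -> (1 < #|L|)%N -> forall x : L, absTr x ^+ 2 = absTr x.
Proof.
move=> h q1 x; rewrite /absTr.
have -> : (\sum_(i < logn 2 #|L|) x ^+ (2 ^ i)) ^+ 2 = pFrobenius_aut h (\sum_(i < logn 2 #|L|) x ^+ (2 ^ i)) by [].
rewrite rmorph_sum /=.
have : (0 < logn 2 #|L|)%N.
  move: q1; rewrite {1}(cardL2 h); case: (logn 2 #|L|) => //.
case: (logn 2 #|L|) (cardL2 h) => // m hq _.
rewrite big_ord_recr big_ord_recl /= addrC; congr (_ + _).
  by rewrite pFrobenius_autE -exprM -expnSr -hq expf_card.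
by apply: eq_bigr => i _; rewrite pFrobenius_autE -exprM -expnSr.
Qed.



Lemma absTr01 (L : finFieldType) : (2 \in [pchar L])%N -> (1 < #|L|)%N -> forall x : L, absTr x = 0 \/ absTr x = 1.
Proof.
move=> h q1 x; have := absTr_sq h q1 x.
move/eqP; rewrite expr2 -{3}(mulr1 (absTr x)) -subr_eq0 -mulrBr mulf_eq0 subr_eq0.
by case/orP => /eqP ->; [left|right].
Qed.

Lemma muD (L : finFieldType) : (2 \in [pchar L])%N -> (1 < #|L|)%N -> forall x y : L, mu (x + y) = mu x * mu y.
Proof.
move=> h q1 x y; rewrite /mu absTrD //.
case: (absTr01 h q1 x) => ->; case: (absTr01 h q1 y) => ->;
 rewrite ?addr0 ?add0r ?eqxx ?oner_eq0 ?addrr_pchar2 ?eqxx //.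
Qed.

Lemma mu0 (L : finFieldType) : mu (0 : L) = 1.
Proof. by rewrite /mu /absTr big1 ?eqxx // => i _; rewrite expr0n expn_eq0. Qed.

Lemma absTr_nz (L : finFieldType) : (2 \in [pchar L])%N -> (1 < #|L|)%N -> exists x : L, absTr x != 0.
Proof.
move=> h q1; apply/existsP; apply: contraT; rewrite negb_exists => /forallP H.
pose n := logn 2 #|L|.
have n0 : (0 < n)%N by move: q1; rewrite {1}(cardL2 h) /n; case: (logn 2 #|L|).
pose P : {poly L} := \sum_(i < n) 'X^(2 ^ i).
have P0 : P = 0.
  apply: (@roots_geq_poly_eq0 _ P (enum L)).
  - apply/allP => x _; rewrite /root /P horner_sum.
    move: (H x); rewrite negbK /absTr => /eqP Hx; rewrite -[X in _ == X]Hx.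
    by apply/eqP; apply: eq_bigr => i _; rewrite hornerXn.

  - exact: enum_uniq.
  rewrite -cardE (cardL2 h) -/n; apply: leq_trans (size_sum _ _ _) _.
  apply/bigmax_leqP => i _; rewrite size_polyXn.
  have hi : (i <= n.-1)%N by rewrite -ltnS prednK.
  have -> : (2^n = 2^n.-1 + 2^n.-1)%N by rewrite -{1}(prednK n0) expnS mul2n addnn.
  by rewrite -addn1 leq_add // ?leq_exp2l // expn_gt0.
have : P`_1 = 1.
  rewrite /P coef_sum -(prednK n0) big_ord_recl /= coefXn expn0 eqxx big1 ?addr0 //.
  move=> i _; rewrite coefXn eq_sym gtn_eqF //.
  by rewrite -{1}(expn0 2) ltn_exp2l.
by rewrite P0 coef0 => /eqP; rewrite eq_sym oner_eq0.
Qed.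



Lemma sum_mu1 (L : finFieldType) : (2 \in [pchar L])%N -> (1 < #|L|)%N -> \sum_(a : L) mu a = 0.
Proof.
move=> h q1; have [x0 hx0] := absTr_nz h q1.
have m0 : mu x0 = -1 by rewrite /mu (negbTE hx0).
set S := \sum_a mu a.
have : S = - S.
  rewrite {1}/S (reindex_inj (addIr x0)) /=.
  under eq_bigr do rewrite muD // m0 mulrN1.
  by rewrite sumrN.
lia.
Qed.

Lemma sum_mu (L : finFieldType) : (2 \in [pchar L])%N -> (1 < #|L|)%N -> forall t : L,
  \sum_(a : L) mu (a * t) = if t == 0 then (#|L|)%:Z else 0.
Proof.
move=> h q1 t; have [->|t0] := eqVneq t 0.
  under eq_bigr do rewrite mulr0 mu0.
  by rewrite sumr_const cardT -cardE natz.
rewrite -[RHS](sum_mu1 h q1) [RHS](reindex_inj (mulIf t0)) /=. by [].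
Qed.

Lemma expinj (L : finFieldType) (s : nat) : coprime s #|L|.-1 -> (0 < s)%N -> injective (fun x : L => x ^+ s).
Proof.
move=> cop s0.
have q1 := finNzRing_gt1 L.
have m0 : (0 < #|L|.-1)%N by rewrite -ltnS prednK // ltnW.
have [a _ ha] := Bezoutl s m0.
move: ha; rewrite gcdnC (eqP cop) => /dvdnP [k hk].
have key : forall x : L, x != 0 -> x * (x ^+ s) ^+ a = 1.
  move=> x x0; rewrite -exprM -exprS -addn1 addnC mulnC hk mulnC exprM.
  have -> : x ^+ #|L|.-1 = 1.
    apply: (mulIf x0); rewrite mul1r -exprSr prednK ?expf_card //; lia.
  by rewrite expr1n.
move=> x y e; move: e => /= e.
have [x0|x0] := eqVneq x 0.
  move: e; rewrite x0 expr0n gtn_eqF // => /esym /eqP; rewrite expf_eq0 s0 /= => /eqP.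
  by [].
have [y0|y0] := eqVneq y 0.
  by move: e; rewrite y0 expr0n gtn_eqF // => /eqP; rewrite expf_eq0 s0 (negbTE x0).
have := key x x0; rewrite e -(key y y0) => /mulIf; apply.
by rewrite expf_neq0 // expf_neq0.
Qed.



Definition Cf (L : finFieldType) (s : nat) (u : L) : int := \sum_(x : L) mu (x ^+ s + (x + u) ^+ s).
Definition Kf (L : finFieldType) (s : nat) (c : L) : int := \sum_(x : L) mu (c * ((x + 1) ^+ s + x ^+ s)).

Lemma W2 (L : finFieldType) (s : nat) : (2 \in [pchar L])%N -> (1 < #|L|)%N -> forall a : L,
  fourier (fun x : L => x ^+ s) a ^+ 2 = \sum_(u : L) mu (a * u) * Cf s u.
Proof.
move=> h q1 a.
transitivity (\sum_(x : L) \sum_(u : L) mu (a*u) * mu (x^+s + (x+u)^+s)).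
  rewrite /fourier expr2 mulr_suml; apply: eq_bigr => x _.
  rewrite mulr_sumr (reindex_inj (addrI x)) /=; apply: eq_bigr => u _.
  rewrite -!muD //; congr mu.
  have E : a*x + x^+s + (a*(x+u) + (x+u)^+s) = (a*x + a*x) + (a*u + (x^+s + (x+u)^+s)) by ring.
  by rewrite E addrr_pchar2 // add0r.
rewrite exchange_big; apply: eq_bigr => u _; by rewrite -mulr_sumr.
Qed.

Lemma W4 (L : finFieldType) (s : nat) : (2 \in [pchar L])%N -> (1 < #|L|)%N ->
  \sum_(a : L) fourier (fun x : L => x ^+ s) a ^+ 4 = (#|L|)%:Z * \sum_(u : L) Cf s u ^+ 2.
Proof.
move=> h q1.
transitivity (\sum_(a : L) \sum_(u : L) \sum_(v : L) mu (a*(u+v)) * (Cf s u * Cf s v)).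
  apply: eq_bigr => a _; rewrite (_ : 4 = 2+2)%N // exprD W2 // mulr_suml.
  apply: eq_bigr => u _; rewrite mulr_sumr; apply: eq_bigr => v _.
  rewrite mulrDr muD //; ring.
rewrite exchange_big mulr_sumr; apply: eq_bigr => u _.
rewrite exchange_big /=.
transitivity (\sum_(v : L) (Cf s u * Cf s v) * (if u + v == 0 then (#|L|)%:Z else 0)).
  by apply: eq_bigr => v _; rewrite -mulr_suml sum_mu // mulrC.
rewrite (bigD1 u) //= big1 ?addr0.
  by rewrite addrr_pchar2 // eqxx; ring.
move=> v vu; have : u + v != 0 by rewrite addr_eq0 oppr_pchar2 // eq_sym.
by move/negbTE => ->; rewrite mulr0.
Qed.

Lemma CK (L : finFieldType) (s : nat) : (2 \in [pchar L])%N -> (0 < s)%N -> forall u : L,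
  Cf s u = Kf s (u ^+ s).
Proof.
move=> h s0 u; have [->|u0] := eqVneq u 0.
  rewrite /Cf /Kf expr0n gtn_eqF //; apply: eq_bigr => x _.
  by rewrite addr0 addrr_pchar2 // mul0r.
rewrite /Cf (reindex_inj (mulIf u0)) /=; apply: eq_bigr => y _; congr mu.
have -> : y * u + u = (y + 1) * u by ring.
by rewrite !exprMn; ring.
Qed.



Lemma sumC2 (L : finFieldType) (s : nat) : (2 \in [pchar L])%N -> (0 < s)%N -> coprime s #|L|.-1 ->
  \sum_(u : L) Cf s u ^+ 2 = \sum_(c : L) Kf s c ^+ 2.
Proof.
move=> h s0 cop; rewrite [RHS](reindex_inj (expinj cop s0)) /=.
by apply: eq_bigr => u _; rewrite CK.
Qed.

Lemma sumK2 (L : finFieldType) (s : nat) : (2 \in [pchar L])%N -> (1 < #|L|)%N ->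
  APN (fun x : L => x ^+ s) ->
  \sum_(c : L) Kf s c ^+ 2 = ((#|L|)%:Z ^+ 2) *+ 2.
Proof.
move=> h q1 apn.
pose D (x : L) := (x + 1) ^+ s + x ^+ s.
transitivity (\sum_(c : L) \sum_(x : L) \sum_(z : L) mu (c * (D x + D z))).
  apply: eq_bigr => c _; rewrite expr2 /Kf mulr_suml; apply: eq_bigr => x _.
  rewrite mulr_sumr; apply: eq_bigr => z _; by rewrite -muD // -mulrDr.
rewrite exchange_big.
transitivity (\sum_(x : L) \sum_(z : L) (if D z == D x then (#|L|)%:Z else 0)).
  apply: eq_bigr => x _; rewrite exchange_big; apply: eq_bigr => z _.
  by rewrite sum_mu // addr_eq0 oppr_pchar2 // eq_sym.
transitivity (\sum_(x : L) (#|L|)%:Z *+ 2).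
  apply: eq_bigr => x _; rewrite -big_mkcond /= sumr_const.
  have Hc : #|[set z | D z == D x]| = #|(fun z => D z == D x)| by apply: eq_card => z; rewrite inE.
  congr (_ *+ _); rewrite -Hc.
  case: (apn 1 (oner_neq0 _) (D x)) => //= H0.
  have : x \in [set z | D z == D x] by rewrite inE.
  by move: H0 => /eqP; rewrite cards_eq0 => /eqP ->; rewrite inE.
rewrite sumr_const cardT -cardE -mulrnA mulnC mulrnA; congr (_ *+ 2).
by rewrite expr2 -mulr_natr natz.
Qed.



Lemma F5_pow4 (x : 'F_5) : x != 0 -> x ^+ 4 = 1.
Proof.
move=> x0; apply: (mulIf x0); rewrite mul1r -exprSr.
by have := expf_card x; rewrite card_Fp.
Qed.

Theorem mainTheorem1 (L : finFieldType) (s : nat) :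
  (2 \in [pchar L])%N ->
  (2 < #|L|)%N ->
  (#|L| %% 5 != 2)%N -> (#|L| %% 5 != 4)%N ->
  coprime s #|L|.-1 ->
  APN (fun x : L => x ^+ s) ->
  exists2 a : L, a != 0 & (5 %| fourier (fun x : L => x ^+ s) a)%Z.
Proof.
move=> h q2 n2 n4 cop apn.
have q1 : (1 < #|L|)%N by apply: ltnW.
have s0 : (0 < s)%N.
  move: cop q2; case: s apn => // _; rewrite /coprime gcd0n => /eqP; lia.
have tot : \sum_(a : L) fourier (fun x : L => x ^+ s) a ^+ 4 = ((#|L|)%:Z ^+ 3) *+ 2.
  by rewrite W4 // sumC2 // sumK2 // mulrnAr -exprS.
set W := fourier _ in tot *.
have [/existsP [a /andP [a0 da]]|] := boolP [exists a : L, (a != 0) && (5 %| W a)%Z].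
  by exists a.
rewrite negb_exists => /forallP Hn; exfalso.
have ch := pchar_Fp (isT : prime 5).
have H1 : forall a : L, a != 0 -> ((W a)%:~R : 'F_5) ^+ 4 = 1.
  move=> a a0; have := Hn a; rewrite a0 /= (dvdz_pcharf ch) => nz.
  exact: F5_pow4.
have nz0 : ~~ (5 %| #|L|)%N by rewrite (cardL2 h) Euclid_dvdX.
have := congr1 (fun z : int => (z%:~R : 'F_5)) tot => /=.
rewrite rmorph_sum /= rmorphMn rmorphXn /=.
under eq_bigr do rewrite rmorphXn.
rewrite (bigD1 0) //= (eq_bigr (fun _ => 1)); last by move=> a /H1.
rewrite sumr_const cardC1.
set m := #|L|.-1.
have hm : #|L| = m.+1 by rewrite prednK // ltnW.
have e1 : ((#|L|%:Z)%:~R : 'F_5) = (m %% 5)%:R + 1.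
  by rewrite -pmulrn hm mulrSr Fp_nat_mod.
rewrite e1 -[m%:R]Fp_nat_mod.
have : (m %% 5 = 0 \/ m %% 5 = 2)%N by lia.
case => ->; case: (eqVneq ((W 0)%:~R : 'F_5) 0) => [->|/F5_pow4 ->].
all: try by move/eqP.
by [].
Qed.
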